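(* Let $k\ge1$, let $D$ be a digraph containing a cylindrical wall $W$ of order $l\ge 3k$ with vertical dicycles $Q_1,\dots,Q_l$. Then for every $(A,B)\in\mathcal{S}_k(D)$ there is exactly one side $X\in\{A,B\}$ such that $X\setminus(A\cap B)$ contains $V(Q_i)$ for some $i\in[l]$. Moreover, the map $\mathsf{big}_W$ sending each $(A,B)\in\mathcal{S}_k(D)$ to this side is a tangle of order $k$.
   Context: The elementary cylindrical $l$-wall has vertices $v_{r,c}$, $r,c\in[2l]$, and edges: for odd $r$, $(v_{r,c},v_{r,c+1})$ ($c\in[2l-1]$); for even $r$, $(v_{r,c+1},v_{r,c})$ ($c\in[2l-1]$); $(v_{r,c},v_{r+1,c})$ for $r$ odd and $c$ even; $(v_{r,c},v_{r+1,c})$ for $r<2l$ even and $c$ odd; and $(v_{2l,c},v_{1,c})$ for $c$ odd. For $j\in[l]$ its $j$-th vertical dicycle is the dicycle using exactly the vertices of columns $2j-1$ and $2j$. A cylindrical $l$-wall is a subdivision of it, with vertical dicycles $Q_1,\dots,Q_l$ the subdivided images of these. A directed separation is $(A,B)$ with $A\cup B=V(D)$ and no edge from $B\setminus A$ to $A\setminus B$; its order is $|A\cap B|$; $\mathcal{S}_k(D)$ is the set of directed separations of order $<k$. An orientation assigns to each $(A,B)\in\mathcal{S}_k$ a big side in $\{A,B\}$, the other being the small side; it is a tangle of order $k$ if no three small sides (of not necessarily distinct separations in $\mathcal{S}_k$) have union $V(D)$. *)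

(* Defs.v *)
From mathcomp Require Import all_boot.
Set Implicit Arguments. Unset Strict Implicit. Unset Printing Implicit Defensive.

(* A digraph is a finite vertex type V with an edge relation E : rel V. *)

Definition wall_vtx (l r c : nat) : bool := (1 <= r <= 2 * l) && (1 <= c <= 2 * l).

Definition wall_edge (l r c r' c' : nat) : bool :=
  [|| [&& odd r, 1 <= r <= 2 * l, 1 <= c, c < 2 * l, r' == r & c' == c.+1],
      [&& ~~ odd r, 1 <= r <= 2 * l, 1 <= c', c' < 2 * l, r' == r & c == c'.+1],
      [&& odd r, ~~ odd c, 1 <= r < 2 * l, 1 <= c <= 2 * l, r' == r.+1 & c' == c],
      [&& ~~ odd r, odd c, 1 <= r < 2 * l, 1 <= c <= 2 * l, r' == r.+1 & c' == c]
    | [&& r == 2 * l, odd c, 1 <= c <= 2 * l, r' == 1 & c' == c]].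

(* D = (V,E) contains a cylindrical l-wall, i.e. a subdivision of the elementary
   cylindrical l-wall as a subgraph: branch vertices phi r c (injective), and for
   every wall edge (v_{r,c}, v_{r',c'}) a directed path
   phi r c :: P r c r' c' in D from phi r c to phi r' c'; internal vertices of
   these paths are not branch vertices and lie on no other subdivided edge. *)
Definition cyl_wall (V : finType) (E : rel V) (l : nat)
    (phi : nat -> nat -> V) (P : nat -> nat -> nat -> nat -> seq V) : Prop :=
  [/\ (forall r c r' c', wall_vtx l r c -> wall_vtx l r' c' ->
         phi r c = phi r' c' -> r = r' /\ c = c'),
      (forall r c r' c', wall_edge l r c r' c' ->
         [/\ path E (phi r c) (P r c r' c'),
             last (phi r c) (P r c r' c') = phi r' c'
           & uniq (phi r c :: P r c r' c')]),
      (forall r c r' c' x, wall_edge l r c r' c' ->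
         x \in P r c r' c' -> x <> phi r' c' ->
         forall r0 c0, wall_vtx l r0 c0 -> x <> phi r0 c0)
    & (forall r c r' c' r2 c2 r2' c2' x,
         wall_edge l r c r' c' -> wall_edge l r2 c2 r2' c2' ->
         (r, c, r', c') <> (r2, c2, r2', c2') ->
         x \in P r c r' c' -> x <> phi r' c' -> x \notin P r2 c2 r2' c2')].

Definition in_cols (j c : nat) : bool := (c == 2 * j - 1) || (c == 2 * j).

(* x is a vertex of the j-th vertical dicycle Q_j of the wall (phi, P):
   the subdivided image of the wall edges within columns 2j-1 and 2j. *)
Definition inQ (V : finType) (l : nat) (phi : nat -> nat -> V)
    (P : nat -> nat -> nat -> nat -> seq V) (j : nat) (x : V) : Prop :=
  exists r c r' c', [/\ wall_edge l r c r' c', in_cols j c, in_cols j c'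
                      & x \in phi r c :: P r c r' c'].

Definition dsep (V : finType) (E : rel V) (A B : {set V}) : Prop :=
  A :|: B = setT /\ (forall x y, x \in B :\: A -> y \in A :\: B -> ~~ E x y).

Definition inSk (V : finType) (E : rel V) (k : nat) (A B : {set V}) : Prop :=
  dsep E A B /\ #|A :&: B| < k.

Definition big_side (V : finType) (o : {set V} -> {set V} -> bool) (A B : {set V}) :=
  if o A B then A else B.
Definition small_side (V : finType) (o : {set V} -> {set V} -> bool) (A B : {set V}) :=
  if o A B then B else A.

Definition is_tangle (V : finType) (E : rel V) (k : nat)
    (o : {set V} -> {set V} -> bool) : Prop :=
  forall A1 B1 A2 B2 A3 B3,
    inSk E k A1 B1 -> inSk E k A2 B2 -> inSk E k A3 B3 ->
    small_side o A1 B1 :|: small_side o A2 B2 :|: small_side o A3 B3 <> setT.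

(* Main.v *)
Require Import Defs.
From mathcomp Require Import all_boot zify.
From Stdlib Require Import Classical ClassicalEpsilon.
Set Implicit Arguments. Unset Strict Implicit.

Lemma we_vtx l r c r' c' : wall_edge l r c r' c' -> wall_vtx l r c /\ wall_vtx l r' c'.
Proof.
rewrite /wall_edge /wall_vtx.
case/orP=> [|/orP[|/orP[|/orP[]]]] => H; split; move: H; case: (odd r); case: (odd c) => /=; lia.
Qed.

Lemma we_h1 l r c : odd r -> 1 <= r <= 2 * l -> 1 <= c -> c < 2 * l -> wall_edge l r c r c.+1.
Proof. by move=> o Hr c1 c2; rewrite /wall_edge o Hr c1 c2 !eqxx. Qed.
Lemma we_h2 l r c : ~~ odd r -> 1 <= r <= 2 * l -> 1 <= c -> c < 2 * l -> wall_edge l r c.+1 r c.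
Proof. by move=> o Hr c1 c2; rewrite /wall_edge o Hr c1 c2 !eqxx !orbT. Qed.
Lemma we_v1 l r c : odd r -> ~~ odd c -> 1 <= r < 2 * l -> 1 <= c <= 2 * l -> wall_edge l r c r.+1 c.
Proof. by move=> o oc Hr Hc; rewrite /wall_edge o oc Hr Hc !eqxx !orbT. Qed.
Lemma we_v2 l r c : ~~ odd r -> odd c -> 1 <= r < 2 * l -> 1 <= c <= 2 * l -> wall_edge l r c r.+1 c.
Proof. by move=> o oc Hr Hc; rewrite /wall_edge o oc Hr Hc !eqxx !orbT. Qed.
Lemma we_v3 l c : odd c -> 1 <= c <= 2 * l -> wall_edge l (2 * l) c 1 c.
Proof. by move=> oc Hc; rewrite /wall_edge oc Hc !eqxx !orbT. Qed.

Lemma branch_on (V : finType) (E : rel V) l phi P (W : cyl_wall E l phi P) s t r2 c2 r2' c2' x :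
  x = phi s t -> wall_vtx l s t -> wall_edge l r2 c2 r2' c2' ->
  x \in phi r2 c2 :: P r2 c2 r2' c2' -> (s, t) = (r2, c2) \/ (s, t) = (r2', c2').
Proof.
case: W => inj _ int _ -> vst e2.
have [v2 v2'] := we_vtx e2.
rewrite inE => /orP[/eqP h|xin].
  by left; have [-> ->] := inj _ _ _ _ vst v2 h.
case: (eqVneq (phi s t) (phi r2' c2')) => h.
  by right; have [-> ->] := inj _ _ _ _ vst v2' h.
by case: (int _ _ _ _ _ e2 xin (elimN eqP h) _ _ vst).
Qed.

Lemma shared (V : finType) (E : rel V) l phi P (W : cyl_wall E l phi P) r c r' c' r2 c2 r2' c2' x :
 wall_edge l r c r' c' -> wall_edge l r2 c2 r2' c2' ->
 x \in phi r c :: P r c r' c' -> x \in phi r2 c2 :: P r2 c2 r2' c2' ->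
 (r, c, r', c') = (r2, c2, r2', c2') \/
 exists s t, ((s, t) = (r, c) \/ (s, t) = (r', c')) /\ ((s, t) = (r2, c2) \/ (s, t) = (r2', c2')).
Proof.
move=> e1 e2 x1 x2.
have [v1 v1'] := we_vtx e1.
have [w2 w2'] := we_vtx e2.
have W' := W; case: W' => inj _ int dis.
move: x1; rewrite inE => /orP[/eqP h|xin].
  right; exists r, c; split; first by left.
  exact: (branch_on W h v1 e2 x2).
case: (eqVneq x (phi r' c')) => h.
  right; exists r', c'; split; first by right.
  exact: (branch_on W h v1' e2 x2).
move: x2; rewrite inE => /orP[/eqP h2|xin2].
  by case: (int _ _ _ _ _ e1 xin (elimN eqP h) _ _ w2 h2).
case: (eqVneq (r, c, r', c') (r2, c2, r2', c2')) => he; first by left.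
by move: (dis _ _ _ _ _ _ _ _ _ e1 e2 (elimN eqP he) xin (elimN eqP h)); rewrite xin2.
Qed.

Lemma step_S (V : finType) (E : rel V) A B u v : dsep E A B ->
  u \in B :\: A -> E u v -> v \notin A :&: B -> v \in B :\: A.
Proof.
case=> cov ne uS euv vn.
have : v \in A :|: B by rewrite cov inE.
have := ne u v uS. rewrite euv.
move: vn; rewrite !inE; case: (v \in A); case: (v \in B) => //= _ h _.
Qed.

Lemma path_S_last (V : finType) (E : rel V) A B : dsep E A B -> forall p x y,
  path E x p -> y \in x :: p -> y \in B :\: A ->
  (forall z, z \in p -> z \notin A :&: B) -> last x p \in B :\: A.
Proof.
move=> ds; elim=> [|z p IH] x y /=.
  by move=> _; rewrite inE => /eqP ->.
case/andP=> exz pz; rewrite inE => /orP[/eqP ->|yin] yS hz.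
  apply: (IH z z pz (mem_head _ _)); last by move=> w wi; apply: hz; rewrite inE wi orbT.
  apply: (step_S ds yS exz); apply: hz; exact: mem_head.
apply: (IH z y pz yin yS); by move=> w wi; apply: hz; rewrite inE wi orbT.
Qed.

Lemma path_S (V : finType) (E : rel V) A B : dsep E A B -> forall p x y,
  path E x p -> x \in B :\: A ->
  (forall z, z \in p -> z \notin A :&: B) -> y \in x :: p -> y \in B :\: A.
Proof.
move=> ds p x y px xS hz; rewrite inE => /orP[/eqP ->//|yin].
case/splitPr: yin px hz => p1 p2.
rewrite -cat_rcons cat_path => /andP[p1p _] hz.
have := path_S_last ds p1p (mem_head _ _) xS.
rewrite last_rcons. apply=> z zi; apply: hz; rewrite mem_cat zi //.
Qed.

Lemma path_hit (V : finType) (E : rel V) A B p x : dsep E A B ->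
  path E x p -> x \in B :\: A -> last x p \notin B :\: A ->
  exists z, z \in p /\ z \in A :&: B.
Proof.
move=> ds px xS lS.
case: (boolP (has (fun z => z \in A :&: B) p)) => [/hasP[z zi zs]|/hasPn hn].
  by exists z.
by move: lS; rewrite (path_S_last ds px (mem_head _ _) xS hn).
Qed.

Lemma odd_a i : 1 <= i -> odd (2 * i - 1).
Proof. move=> h; have -> : 2 * i - 1 = (i.-1).*2.+1 by rewrite -mul2n; lia. by rewrite /= odd_double. Qed.
Lemma odd_b i : ~~ odd (2 * i).
Proof. by rewrite mul2n odd_double. Qed.
Lemma cols_a i : in_cols i (2 * i - 1). Proof. by rewrite /in_cols eqxx. Qed.
Lemma cols_b i : in_cols i (2 * i). Proof. by rewrite /in_cols eqxx orbT. Qed.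

Lemma Qedge_last (V : finType) (E : rel V) l phi P (W : cyl_wall E l phi P) A B i
  (ds : dsep E A B) (avoid : forall x, inQ l phi P i x -> x \notin A :&: B)
  r c r' c' y : wall_edge l r c r' c' -> in_cols i c -> in_cols i c' ->
  y \in phi r c :: P r c r' c' -> y \in B :\: A -> phi r' c' \in B :\: A.
Proof.
move=> e ic ic' yi yS.
case: W => _ hp _ _; case: (hp _ _ _ _ e) => pth lst _.
rewrite -lst; apply: (path_S_last ds pth yi yS) => z zi.
apply: avoid; exists r, c, r', c'; split => //; by rewrite inE zi orbT.
Qed.

Lemma Qedge_all (V : finType) (E : rel V) l phi P (W : cyl_wall E l phi P) A B i
  (ds : dsep E A B) (avoid : forall x, inQ l phi P i x -> x \notin A :&: B)
  r c r' c' y : wall_edge l r c r' c' -> in_cols i c -> in_cols i c' ->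
  phi r c \in B :\: A -> y \in phi r c :: P r c r' c' -> y \in B :\: A.
Proof.
move=> e ic ic' xS yi.
case: W => _ hp _ _; case: (hp _ _ _ _ e) => pth lst _.
apply: (path_S ds pth xS _ yi) => z zi.
apply: avoid; exists r, c, r', c'; split => //; by rewrite inE zi orbT.
Qed.

Definition Gr (V : finType) (phi : nat -> nat -> V) (S : {set V}) i r :=
  phi r (if odd r then 2 * i - 1 else 2 * i) \in S.


Lemma G_F (V : finType) (E : rel V) l phi P (W : cyl_wall E l phi P) A B i
  (ds : dsep E A B) (avoid : forall x, inQ l phi P i x -> x \notin A :&: B) r :
  1 <= i <= l -> 1 <= r <= 2 * l -> Gr phi (B :\: A) i r ->
  phi r (2 * i - 1) \in B :\: A /\ phi r (2 * i) \in B :\: A.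
Proof.
move=> Hi Hr; rewrite /Gr.
have ea : (2 * i - 1).+1 = 2 * i by lia.
case: (boolP (odd r)) => o G.
  split => //.
  have := we_h1 (l:=l) (c:=2 * i - 1) o Hr; rewrite ea => e.
  by apply: (Qedge_last W ds avoid (e ltac:(lia) ltac:(lia)) (cols_a i) (cols_b i) (mem_head _ _) G).
split => //.
have := we_h2 (l:=l) (c:=2 * i - 1) o Hr; rewrite ea => e.
by apply: (Qedge_last W ds avoid (e ltac:(lia) ltac:(lia)) (cols_b i) (cols_a i) (mem_head _ _) G).
Qed.

Lemma G_step (V : finType) (E : rel V) l phi P (W : cyl_wall E l phi P) A B i
  (ds : dsep E A B) (avoid : forall x, inQ l phi P i x -> x \notin A :&: B) r :
  1 <= i <= l -> 1 <= r < 2 * l -> Gr phi (B :\: A) i r -> Gr phi (B :\: A) i r.+1.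
Proof.
move=> Hi Hr G.
have [Ga Gb] := G_F W ds avoid Hi (ltac:(lia) : 1 <= r <= 2 * l) G.
rewrite /Gr /=.
case: (boolP (odd r)) => o /=.
  have e := we_v1 (l:=l) o (odd_b i) Hr ltac:(lia).
  exact: (Qedge_last W ds avoid e (cols_b i) (cols_b i) (mem_head _ _) Gb).
have e := we_v2 (l:=l) o (odd_a (ltac:(lia) : 1 <= i)) Hr ltac:(lia).
exact: (Qedge_last W ds avoid e (cols_a i) (cols_a i) (mem_head _ _) Ga).
Qed.

Lemma G_wrap (V : finType) (E : rel V) l phi P (W : cyl_wall E l phi P) A B i
  (ds : dsep E A B) (avoid : forall x, inQ l phi P i x -> x \notin A :&: B) :
  1 <= i <= l -> Gr phi (B :\: A) i (2 * l) -> Gr phi (B :\: A) i 1.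
Proof.
move=> Hi G.
have [Ga Gb] := G_F W ds avoid Hi (ltac:(lia) : 1 <= 2 * l <= 2 * l) G.
rewrite /Gr /=.
have e := we_v3 (l:=l) (odd_a (ltac:(lia) : 1 <= i)) ltac:(lia).
exact: (Qedge_last W ds avoid e (cols_a i) (cols_a i) (mem_head _ _) Ga).
Qed.

Lemma G_fwd (V : finType) (E : rel V) l phi P (W : cyl_wall E l phi P) A B i
  (ds : dsep E A B) (avoid : forall x, inQ l phi P i x -> x \notin A :&: B) r :
  1 <= i <= l -> 1 <= r -> Gr phi (B :\: A) i r ->
  forall d, r + d <= 2 * l -> Gr phi (B :\: A) i (r + d).
Proof.
move=> Hi Hr G; elim=> [|d IH] h; first by rewrite addn0.
rewrite addnS; apply: (G_step W ds avoid Hi); first lia.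
apply: IH; lia.
Qed.

Lemma branch_all (V : finType) (E : rel V) l phi P (W : cyl_wall E l phi P) A B i
  (ds : dsep E A B) (avoid : forall x, inQ l phi P i x -> x \notin A :&: B) r0 c0 :
  1 <= i <= l -> 1 <= r0 <= 2 * l -> in_cols i c0 -> phi r0 c0 \in B :\: A ->
  forall r c, 1 <= r <= 2 * l -> in_cols i c -> phi r c \in B :\: A.
Proof.
move=> Hi Hr0 ic0 S0.
have G1 : Gr phi (B :\: A) i 1.
  have toEnd : forall r, 1 <= r <= 2 * l -> Gr phi (B :\: A) i r -> Gr phi (B :\: A) i 1.
    move=> r Hr Gr0; apply: (G_wrap W ds avoid Hi).
    have := G_fwd W ds avoid Hi (ltac:(lia) : 1 <= r) Gr0 (d := 2 * l - r) ltac:(lia).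
    by have -> : r + (2 * l - r) = 2 * l by lia.
  have [[Ga Gb]|//] : phi r0 (2 * i - 1) \in B :\: A /\ phi r0 (2 * i) \in B :\: A \/
                 Gr phi (B :\: A) i 1.
    move: ic0; rewrite /in_cols => /orP[]/eqP ce; subst c0.
      case: (boolP (odd r0)) => o.
        left; apply: (G_F W ds avoid Hi Hr0); by rewrite /Gr o.
      case: (ltnP r0 (2 * l)) => hr.
        right; apply: (toEnd r0.+1); first lia.
        rewrite /Gr /= o /=.
        have e := we_v2 (l:=l) o (odd_a (ltac:(lia) : 1 <= i)) ltac:(lia) ltac:(lia).
        exact: (Qedge_last W ds avoid e (cols_a i) (cols_a i) (mem_head _ _) S0).
      right; have re : r0 = 2 * l by lia. subst r0.
      rewrite /Gr /=.
      have e := we_v3 (l:=l) (odd_a (ltac:(lia) : 1 <= i)) ltac:(lia).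
      exact: (Qedge_last W ds avoid e (cols_a i) (cols_a i) (mem_head _ _) S0).
    case: (boolP (odd r0)) => o.
      right; apply: (toEnd r0.+1).
        have : r0 != 2 * l by apply/negP => /eqP h; move: o; rewrite h (negbTE (odd_b l)).
        lia.
      rewrite /Gr /= o /=.
      have : r0 != 2 * l by apply/negP => /eqP h; move: o; rewrite h (negbTE (odd_b l)).
      move=> hne.
      have e := we_v1 (l:=l) o (odd_b i) ltac:(lia) ltac:(lia).
      exact: (Qedge_last W ds avoid e (cols_b i) (cols_b i) (mem_head _ _) S0).
    left; apply: (G_F W ds avoid Hi Hr0); by rewrite /Gr (negbTE o).
  by apply: (toEnd r0) => //; rewrite /Gr; case: (odd r0).
move=> r c Hr ic.
have Gr' := G_fwd W ds avoid Hi (ltac:(lia) : 1 <= 1) G1 (d := r - 1) ltac:(lia).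
have -> : r = 1 + (r - 1) by lia.
have [Ga Gb] := G_F W ds avoid Hi (ltac:(lia) : 1 <= 1 + (r - 1) <= 2 * l) Gr'.
by move: ic; rewrite /in_cols => /orP[]/eqP ->.
Qed.

Lemma Q_all_S (V : finType) (E : rel V) l phi P (W : cyl_wall E l phi P) A B i
  (ds : dsep E A B) (avoid : forall x, inQ l phi P i x -> x \notin A :&: B) :
  1 <= i <= l -> (exists y, inQ l phi P i y /\ y \in B :\: A) ->
  forall x, inQ l phi P i x -> x \in B :\: A.
Proof.
move=> Hi [y [[r [c [r' [c' [e ic ic' yi]]]]] yS]].
have S' := Qedge_last W ds avoid e ic ic' yi yS.
have [_ /andP[hr' _]] := we_vtx e.
have ball := branch_all W ds avoid Hi hr' ic' S'.
move=> x [r2 [c2 [r2' [c2' [e2 ic2 ic2' xi]]]]].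
have [/andP[hr2 _] _] := we_vtx e2.
exact: (Qedge_all W ds avoid e2 ic2 ic2' (ball _ _ hr2 ic2) xi).
Qed.

Lemma phiQ (V : finType) (E : rel V) l phi P (W : cyl_wall E l phi P) i r c :
  1 <= i <= l -> 1 <= r <= 2 * l -> in_cols i c -> inQ l phi P i (phi r c).
Proof.
move=> Hi Hr ic.
have ea : (2 * i - 1).+1 = 2 * i by lia.
case: W => _ hp _ _.
case: (boolP (odd r)) => o.
  have := we_h1 (l:=l) (c:=2 * i - 1) o Hr; rewrite ea => e.
  have {}e := e ltac:(lia) ltac:(lia).
  exists r, (2 * i - 1), r, (2 * i); split => //; [exact: cols_a|exact: cols_b|].
  move: ic; rewrite /in_cols => /orP[]/eqP ->; first exact: mem_head.
  case: (hp _ _ _ _ e) => _ <- _; exact: mem_last.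
have := we_h2 (l:=l) (c:=2 * i - 1) o Hr; rewrite ea => e.
have {}e := e ltac:(lia) ltac:(lia).
exists r, (2 * i), r, (2 * i - 1); split => //; [exact: cols_b|exact: cols_a|].
move: ic; rewrite /in_cols => /orP[]/eqP ->; last exact: mem_head.
case: (hp _ _ _ _ e) => _ <- _; exact: mem_last.
Qed.

Lemma dichot (V : finType) (E : rel V) l phi P (W : cyl_wall E l phi P) A B i
  (ds : dsep E A B) (avoid : forall x, inQ l phi P i x -> x \notin A :&: B) :
  1 <= i <= l ->
  (forall x, inQ l phi P i x -> x \in B :\: A) \/ (forall x, inQ l phi P i x -> x \in A :\: B).
Proof.
move=> Hi.
have y0 := phiQ W (r := 1) Hi ltac:(lia) (cols_a i).
case: (boolP (phi 1 (2 * i - 1) \in B :\: A)) => h.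
  by left; apply: (Q_all_S W ds avoid Hi); exists (phi 1 (2 * i - 1)).
right => x xq.
case: (boolP (x \in B :\: A)) => hx.
  by move: h; rewrite (Q_all_S W ds avoid Hi (ex_intro _ x (conj xq hx)) y0).
have := avoid x xq.
have : x \in A :|: B by case: ds => -> _; rewrite inE.
move: hx; rewrite !inE; case: (x \in A); case: (x \in B) => //.
Qed.

Lemma in_cols_inj i j t : in_cols i t -> in_cols j t -> 1 <= i -> 1 <= j -> i = j.
Proof. rewrite /in_cols => h1 h2 hi hj; case/orP: h1 => /eqP h1; case/orP: h2 => /eqP h2; lia. Qed.

Lemma col_disj (V : finType) (E : rel V) l phi P (W : cyl_wall E l phi P) i j x :
  inQ l phi P i x -> inQ l phi P j x -> 1 <= i -> 1 <= j -> i = j.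
Proof.
move=> [r [c [r' [c' [e ic ic' xi]]]]] [r2 [c2 [r2' [c2' [e2 ic2 ic2' xi2]]]]] hi hj.
case: (shared W e e2 xi xi2) => [[_ ec _ _]|[s [t [h1 h2]]]].
  by subst c; exact: (in_cols_inj ic ic2).
have it : in_cols i t by case: h1 => [[_ ->]|[_ ->]].
have jt : in_cols j t by case: h2 => [[_ ->]|[_ ->]].
exact: (in_cols_inj it jt).
Qed.

Lemma count_inj (V : finType) (Z : {set V}) l (R : nat -> V -> Prop) :
  (forall t1 t2 x, t1 < l -> t2 < l -> R t1 x -> R t2 x -> t1 = t2) ->
  (forall t, t < l -> exists x, x \in Z /\ R t x) -> l <= #|Z|.
Proof.
move=> hinj hex.
pose f (t : 'I_l) : V := proj1_sig (constructive_indefinite_description _ (hex t (ltn_ord t))).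
have fP : forall t, f t \in Z /\ R t (f t).
  move=> t; rewrite /f; case: (constructive_indefinite_description _ _) => //.
have finj : injective f.
  move=> t1 t2 e; apply: val_inj => /=.
  have [_ h1] := fP t1; have [_ h2] := fP t2.
  rewrite e in h1; exact: (hinj _ _ _ (ltn_ord t1) (ltn_ord t2) h1 h2).
have <- : #|f @: [set: 'I_l]| = l by rewrite card_imset // cardsT card_ord.
apply: subset_leq_card; apply/subsetP => x /imsetP[t _ ->]; by have [] := fP t.
Qed.

Definition RowHit (V : finType) l (phi : nat -> nat -> V) P r x :=
  exists c c', wall_edge l r c r c' /\ x \in phi r c :: P r c r c'.

Lemma row_disj (V : finType) (E : rel V) l phi P (W : cyl_wall E l phi P) r r2 x :
  RowHit l phi P r x -> RowHit l phi P r2 x -> r = r2.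
Proof.
move=> [c [c' [e xi]]] [c2 [c2' [e2 xi2]]].
case: (shared W e e2 xi xi2) => [[-> _ _ _]//|[s [t [h1 h2]]]].
have e1 : s = r by case: h1 => [[]|[]].
have e2' : s = r2 by case: h2 => [[]|[]].
by rewrite -e1 -e2'.
Qed.

Lemma chain (V : finType) (E : rel V) A B (ds : dsep E A B) (g : nat -> V) (p : nat -> seq V) N :
  g 0 \in B :\: A -> g N \notin B :\: A ->
  (forall m, m < N -> path E (g m) (p m) /\ last (g m) (p m) = g m.+1) ->
  exists m, m < N /\ exists x, x \in g m :: p m /\ x \in A :&: B.
Proof.
move=> g0 gN hp.
suff : forall n, n <= N -> g n \in B :\: A \/ exists m, m < n /\ exists x, x \in g m :: p m /\ x \in A :&: B.
  case/(_ N (leqnn N)) => [h|[m [mn h]]]; first by rewrite h in gN.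
  by exists m.
elim=> [|n IH] hn; first by left.
case: (IH ltac:(lia)) => [gn|[m [mn h]]]; last by right; exists m; split => //; lia.
have [pth lst] := hp n hn.
case: (boolP (g n.+1 \in B :\: A)) => h; first by left.
rewrite -lst in h.
have [z [zi zs]] := path_hit ds pth gn h.
right; exists n; split => //; exists z; by rewrite inE zi orbT.
Qed.

Lemma noboth (V : finType) (E : rel V) l phi P (W : cyl_wall E l phi P) A B i j
  (ds : dsep E A B) : #|A :&: B| < l -> 1 <= i <= l -> 1 <= j <= l ->
  (forall x, inQ l phi P i x -> x \in A :\: B) ->
  (forall x, inQ l phi P j x -> x \in B :\: A) -> False.
Proof.
move=> hc Hi Hj HQi HQj.
case: (ltngtP i j) => hij; last first.
- subst j; have y0 := phiQ W (r := 1) Hi ltac:(lia) (cols_a i).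
  by have := HQi _ y0; have := HQj _ y0; rewrite !inE; case: (_ \in A); case: (_ \in B).
- have : l <= #|A :&: B|; last lia.
  apply: (count_inj (R := fun t x => RowHit l phi P (2 * t + 1) x)).
    move=> t1 t2 x _ _ h1 h2; have := row_disj W h1 h2; lia.
  move=> t tl.
  set r := 2 * t + 1.
  have Hr : 1 <= r <= 2 * l by rewrite /r; lia.
  have o : odd r by rewrite /r addn1 /= odd_b.
  have G0 : phi r (2 * j + 0) \in B :\: A.
    rewrite addn0; apply: HQj; exact: (phiQ W Hj Hr (cols_b j)).
  have GN : phi r (2 * j + (2 * i - 1 - 2 * j)) \notin B :\: A.
    have -> : 2 * j + (2 * i - 1 - 2 * j) = 2 * i - 1 by lia.
    have := HQi _ (phiQ W Hi Hr (cols_a i)); rewrite !inE.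
    by case: (_ \in A); case: (_ \in B).
  have HP : forall m, m < 2 * i - 1 - 2 * j ->
     path E (phi r (2 * j + m)) (P r (2 * j + m) r (2 * j + m).+1) /\
     last (phi r (2 * j + m)) (P r (2 * j + m) r (2 * j + m).+1) = phi r (2 * j + m.+1).
    move=> m hm.
    have e := we_h1 (l := l) (c := 2 * j + m) o Hr ltac:(lia) ltac:(lia).
    case: W => _ hp _ _; case: (hp _ _ _ _ e) => pth lst _.
    by rewrite addnS.
  have [m [hm [x [xi xs]]]] := chain ds (g := fun n => phi r (2 * j + n))
     (p := fun n => P r (2 * j + n) r (2 * j + n).+1) G0 GN HP.
  exists x; split => //.
  exists (2 * j + m), (2 * j + m).+1; split => //.
  exact: (we_h1 (l := l) (c := 2 * j + m) o Hr ltac:(lia) ltac:(lia)).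
- have : l <= #|A :&: B|; last lia.
  apply: (count_inj (R := fun t x => RowHit l phi P (2 * t + 2) x)).
    move=> t1 t2 x _ _ h1 h2; have := row_disj W h1 h2; lia.
  move=> t tl.
  set r := 2 * t + 2.
  have Hr : 1 <= r <= 2 * l by rewrite /r; lia.
  have o : ~~ odd r by rewrite /r -mulnSr odd_b.
  have G0 : phi r (2 * j - 1 - 0) \in B :\: A.
    rewrite subn0; apply: HQj; exact: (phiQ W Hj Hr (cols_a j)).
  have GN : phi r (2 * j - 1 - (2 * j - 1 - 2 * i)) \notin B :\: A.
    have -> : 2 * j - 1 - (2 * j - 1 - 2 * i) = 2 * i by lia.
    have := HQi _ (phiQ W Hi Hr (cols_b i)); rewrite !inE.
    by case: (_ \in A); case: (_ \in B).
  have HP : forall m, m < 2 * j - 1 - 2 * i ->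
     path E (phi r (2 * j - 1 - m)) (P r (2 * j - 1 - m) r (2 * j - 2 - m)) /\
     last (phi r (2 * j - 1 - m)) (P r (2 * j - 1 - m) r (2 * j - 2 - m)) = phi r (2 * j - 1 - m.+1).
    move=> m hm.
    have := we_h2 (l := l) (c := 2 * j - 2 - m) o Hr ltac:(lia) ltac:(lia).
    have -> : (2 * j - 2 - m).+1 = 2 * j - 1 - m by lia.
    move=> e.
    case: W => _ hp _ _; case: (hp _ _ _ _ e) => pth lst _.
    split => //; rewrite lst; congr phi; lia.
  have [m [hm [x [xi xs]]]] := chain ds (g := fun n => phi r (2 * j - 1 - n))
     (p := fun n => P r (2 * j - 1 - n) r (2 * j - 2 - n)) G0 GN HP.
  exists x; split => //.
  exists (2 * j - 1 - m), (2 * j - 2 - m); split => //.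
  have := we_h2 (l := l) (c := 2 * j - 2 - m) o Hr ltac:(lia) ltac:(lia).
  by have -> : (2 * j - 2 - m).+1 = 2 * j - 1 - m by lia.
Qed.

Lemma cardU_le (T : finType) (A B : {set T}) : #|A :|: B| <= #|A| + #|B|.
Proof. have := cardsUI A B; lia. Qed.

Lemma setD_sepA (T : finType) (A B : {set T}) : A :\: (A :&: B) = A :\: B.
Proof. by apply/setP => x; rewrite !inE; case: (x \in A); case: (x \in B). Qed.
Lemma setD_sepB (T : finType) (A B : {set T}) : B :\: (A :&: B) = B :\: A.
Proof. by apply/setP => x; rewrite !inE; case: (x \in A); case: (x \in B). Qed.

Lemma find_col (V : finType) (E : rel V) l phi P (W : cyl_wall E l phi P) (Z : {set V}) :
  #|Z| < l -> exists i, 1 <= i <= l /\ forall x, inQ l phi P i x -> x \notin Z.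
Proof.
move=> hZ.
case: (classic (exists i, 1 <= i <= l /\ forall x, inQ l phi P i x -> x \notin Z)) => // hn.
exfalso.
have : l <= #|Z|; last lia.
apply: (count_inj (R := fun t x => inQ l phi P t.+1 x)).
  by move=> t1 t2 x _ _ h1 h2; have := col_disj W h1 h2 isT isT => -[].
move=> t tl.
apply: NNPP => hx; apply: hn; exists t.+1; split; first lia.
move=> x xq; apply/negP => xz; apply: hx; by exists x.
Qed.

Theorem lemma9p2 (V : finType) (E : rel V) (k l : nat)
    (phi : nat -> nat -> V) (P : nat -> nat -> nat -> nat -> seq V) :
  1 <= k -> 3 * k <= l -> cyl_wall E l phi P ->
  (forall A B : {set V}, inSk E k A B ->
     exists! X : {set V}, (X = A \/ X = B) /\
       exists i, 1 <= i <= l /\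
         (forall x, inQ l phi P i x -> x \in X :\: (A :&: B)))
  /\
  (forall o : {set V} -> {set V} -> bool,
     (forall A B : {set V}, inSk E k A B ->
        exists i, 1 <= i <= l /\
          (forall x, inQ l phi P i x -> x \in big_side o A B :\: (A :&: B))) ->
     is_tangle E k o).
Proof.
move=> hk hl W; split.
  move=> A B [ds hc].
  have hcl : #|A :&: B| < l by lia.
  have [i [Hi av]] := find_col W hcl.
  case: (dichot W ds av Hi) => [HB|HA].
    exists B; split.
      split; first by right.
      by exists i; split => //; rewrite setD_sepB.
    move=> X [[->|//] [i' [Hi' HX]]].
    rewrite setD_sepA in HX.
    by case: (noboth W ds hcl Hi' Hi HX HB).
  exists A; split.
    split; first by left.
    by exists i; split => //; rewrite setD_sepA.
  move=> X [[//|->] [i' [Hi' HX]]].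
  rewrite setD_sepB in HX.
  by case: (noboth W ds hcl Hi Hi' HA HX).
move=> o Hbig.
have notsmall : forall A B m, inSk E k A B -> 1 <= m <= l ->
    (forall x, inQ l phi P m x -> x \notin A :&: B) ->
    forall x, inQ l phi P m x -> x \notin small_side o A B.
  move=> A B m HS Hm avm.
  have [i [Hi HX]] := Hbig A B HS.
  case: HS => ds hc.
  have hcl : #|A :&: B| < l by lia.
  move: HX; rewrite /small_side /big_side; case: (o A B) => HX x xq.
    rewrite setD_sepA in HX.
    case: (dichot W ds avm Hm) => [HBm|HAm].
      by case: (noboth W ds hcl Hi Hm HX HBm).
    by have := HAm x xq; rewrite !inE; case: (x \in B).
  rewrite setD_sepB in HX.
  case: (dichot W ds avm Hm) => [HBm|HAm].
    by have := HBm x xq; rewrite !inE; case: (x \in A).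
  by case: (noboth W ds hcl Hm Hi HAm HX).
move=> A1 B1 A2 B2 A3 B3 H1 H2 H3 Hcov.
set Z := (A1 :&: B1) :|: (A2 :&: B2) :|: (A3 :&: B3).
have hZ : #|Z| < l.
  have := cardU_le (A1 :&: B1 :|: A2 :&: B2) (A3 :&: B3).
  have := cardU_le (A1 :&: B1) (A2 :&: B2).
  case: H1 => _; case: H2 => _; case: H3 => _. rewrite /Z. lia.
have [m [Hm av]] := find_col W hZ.
have av1 : forall x, inQ l phi P m x -> x \notin A1 :&: B1.
  by move=> x xq; apply/negP => h; move/negP: (av x xq); apply; rewrite /Z !in_setU h.
have av2 : forall x, inQ l phi P m x -> x \notin A2 :&: B2.
  by move=> x xq; apply/negP => h; move/negP: (av x xq); apply; rewrite /Z !in_setU h !orbT.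
have av3 : forall x, inQ l phi P m x -> x \notin A3 :&: B3.
  by move=> x xq; apply/negP => h; move/negP: (av x xq); apply; rewrite /Z !in_setU h !orbT.
have vq := phiQ W (r := 1) Hm ltac:(lia) (cols_a m).
have := notsmall _ _ _ H1 Hm av1 _ vq.
have := notsmall _ _ _ H2 Hm av2 _ vq.
have := notsmall _ _ _ H3 Hm av3 _ vq.
have : phi 1 (2 * m - 1) \in [set: V] by rewrite inE.
rewrite -Hcov !inE.
by case: (_ \in small_side o A1 B1); case: (_ \in small_side o A2 B2); case: (_ \in small_side o A3 B3).
Qed.
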